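(* Let $\{\theta_m\}$ satisfy $\theta_1\ge\theta_2\ge\cdots\ge0$, $\theta_m\to0$; $\mathcal B=\mathcal B(\{\theta_m\})$; $b_1,b_2>0$. There exists $C_2>0$, depending only on $b_1,b_2$ (besides $N$ and $\{\theta_m\}$), such that for all $m,q\in\mathbb N$ with $\theta_{m+1}\le1$ and every $g\in V$ satisfying (H): $\|\mathscr L_g\|_{\mathcal B\to\mathcal B}\le C_2$ and $\|\mathscr L_g^q-K^{(q)}_{g,m}\|_{\mathcal B\to\mathcal B}\le C_2^q\theta_{m+1}^q$.
   Context: $\Sigma_{\mathbf A}^+$ is the one-sided Markov shift of an $N\times N$ zero-one aperiodic matrix $\mathbf A$, $\sigma_{\mathbf A}$ the shift. $\mathrm{var}_k(\phi)=\sup\{|\phi(\omega)-\phi(\omega')|:\omega_j=\omega'_j,\ 0\le j\le k-1\}$; $V=\{\phi:\mathrm{var}_k(\phi)^{1/k}\to0\}$. $(\mathscr L_g\phi)(\omega)=\sum_{\sigma_{\mathbf A}\omega'=\omega}e^{g(\omega')}\phi(\omega')$. $\mathcal B(\{\theta_m\})=\{\phi\in V:\exists C\ge0,\ \mathrm{var}_k(\phi)\le C\theta_{k+1}^k\ \forall k\ge0\}$ with norm $\|\phi\|_\infty+\inf C$. Fix a Borel probability $\mu$ charging all nonempty open sets; $(E_m\phi)(\omega)=\mu([\omega|m])^{-1}\int_{[\omega|m]}\phi\,d\mu$, $[\omega|m]=\{\xi:\xi_j=\omega_j,0\le j\le m-1\}$. $K_{g,m}=\mathscr L_g\circ E_m$,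 $K^{(q)}_{g,m}=\mathscr L_g^q-(\mathscr L_g-K_{g,m})^q$. Condition (H) on $g\in V$: $e^{\max\mathrm{Re}\,g}\le b_1$ and $\mathrm{var}_k(g)\le b_2\theta_k^k$ for all $k\in\mathbb N$. *)

(* Defs.v *)
From HB Require Import structures.
From mathcomp Require Import all_boot all_order all_algebra.
From mathcomp Require Import all_classical all_reals all_analysis.
From mathcomp Require Import complex.
Set Implicit Arguments. Unset Strict Implicit. Unset Printing Implicit Defensive.
Import Order.TTheory GRing.Theory Num.Theory.
Import numFieldNormedType.Exports.
Local Open Scope classical_set_scope.
Local Open Scope ring_scope.

(* ambient space of one-sided sequences over the alphabet 'I_N, N = n.+1 *)
Definition shX (n : nat) := nat -> 'I_n.+1.
HB.instance Definition _ n := gen_eqMixin (shX n).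
HB.instance Definition _ n := gen_choiceMixin (shX n).
HB.instance Definition _ n := isPointed.Build (shX n) (fun _ => ord0).

Section Defs.
Variable n : nat.
Local Notation X := (shX n).

Definition cylX (w : X) (k : nat) : set X := [set xi | forall j, (j < k)%N -> xi j = w j].
Definition openX (U : set X) : Prop := forall w, U w -> exists k, cylX w k `<=` U.
Definition XB := g_sigma_algebraType openX.

Definition zero_one (A : 'M[nat]_n.+1) := forall i j, A i j = 0%N \/ A i j = 1%N.
Definition aperiodic (A : 'M[nat]_n.+1) := exists p : nat, forall i j, (0 < (A ^+ p) i j)%N.
Definition Sigma (A : 'M[nat]_n.+1) : set X := [set w | forall j, A (w j) (w j.+1) = 1%N].

Definition cyl (A : 'M[nat]_n.+1) (w : X) (m : nat) : set X := Sigma A `&` cylX w m.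

Definition relopen (A : 'M[nat]_n.+1) (U : set X) : Prop :=
  U `<=` Sigma A /\ forall w, U w -> exists k, cyl A w k `<=` U.

Definition scons (i : 'I_n.+1) (w : X) : X := fun j => if j is j'.+1 then w j' else i.

Variable R : realType.
Local Notation C := R[i].

Definition cabs (z : C) : R := Num.sqrt (complex.Re z ^+ 2 + complex.Im z ^+ 2).
Definition cexp (z : C) : C := Complex (expR (complex.Re z) * cos (complex.Im z)) (expR (complex.Re z) * sin (complex.Im z)).

Variable A : 'M[nat]_n.+1.

Definition var (phi : X -> C) (k : nat) : \bar R :=
  ereal_sup [set r | exists w w', [/\ Sigma A w, Sigma A w',
     (forall j, (j < k)%N -> w j = w' j) & r = (cabs (phi w - phi w'))%:E]].
Definition supn (phi : X -> C) : \bar R :=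
  ereal_sup [set r | exists w, Sigma A w /\ r = (cabs (phi w))%:E].

(* V = {phi : var_k(phi)^(1/k) -> 0}, i.e. for every e > 0, eventually var_k(phi) <= e^k *)
Definition inV (phi : X -> C) : Prop :=
  forall e : R, 0 < e -> \forall k \near \oo, (var phi k <= (e ^+ k)%:E)%E.

Variable theta : nat -> R.

Definition Bconst (phi : X -> C) : set R :=
  [set c | 0 <= c /\ forall k, (var phi k <= (c * theta k.+1 ^+ k)%:E)%E].
Definition inB (phi : X -> C) : Prop := inV phi /\ Bconst phi !=set0.
Definition Bnorm (phi : X -> C) : R := fine (supn phi) + inf (Bconst phi).

Definition opnorm_le (T : (X -> C) -> (X -> C)) (c : R) : Prop :=
  forall phi, inB phi -> inB (T phi) /\ Bnorm (T phi) <= c * Bnorm phi.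

(* transfer operator: sum over the preimages i w (A_{i w_0} = 1) of w *)
Definition Lop (g : X -> C) (phi : X -> C) : X -> C :=
  fun w => \sum_(i < n.+1 | A i (w 0%N) == 1%N) cexp (g (scons i w)) * phi (scons i w).

Variable mu : probability XB R.

Definition cint (D : set X) (f : X -> C) : C :=
  Complex (Rintegral mu D (fun x => complex.Re (f x))) (Rintegral mu D (fun x => complex.Im (f x))).

Definition Eop (m : nat) (phi : X -> C) : X -> C :=
  fun w => ((fine (mu (cyl A w m)))^-1)%:C%C * cint (cyl A w m) phi.

Definition Kop (g : X -> C) (m : nat) (phi : X -> C) : X -> C := Lop g (Eop m phi).

Definition opsub (T S : (X -> C) -> (X -> C)) : (X -> C) -> (X -> C) :=
  fun phi w => T phi w - S phi w.

Definition Kqop (g : X -> C) (m q : nat) : (X -> C) -> (X -> C) :=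
  opsub (iter q (Lop g)) (iter q (opsub (Lop g) (Kop g m))).

Definition condH (b1 b2 : R) (g : X -> C) : Prop :=
  [/\ inV g, (forall w, Sigma A w -> expR (complex.Re (g w)) <= b1)
    & forall k, (1 <= k)%N -> (var g k <= (b2 * theta k ^+ k)%:E)%E].

End Defs.

(* Main.v *)
Require Import Defs.
From HB Require Import structures.
From mathcomp Require Import all_boot all_order all_algebra.
From mathcomp Require Import all_classical all_reals all_analysis.
From mathcomp Require Import complex.
From mathcomp Require Import ring lra zify.
Import Order.TTheory GRing.Theory Num.Theory.
Import numFieldNormedType.Exports.
Local Open Scope classical_set_scope.
Local Open Scope ring_scope.
Section S.
Variable R : realType.
Lemma cabsE (z : R[i]) : cabs z = `|(z : Rcomplex R)|.
Proof. by case: z. Qed.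
Lemma cabsD (x y : R[i]) : cabs (x + y) <= cabs x + cabs y.
Proof. rewrite !cabsE; exact: ler_normD. Qed.
Lemma cabsM (x y : R[i]) : cabs (x * y) = cabs x * cabs y.
Proof. have := @Normc.normcM R x y. by case: x; case: y. Qed.
Lemma cabs_ge0 (x : R[i]) : 0 <= cabs x.
Proof. by rewrite cabsE. Qed.
Lemma cabsN (x : R[i]) : cabs (- x) = cabs x.
Proof. by rewrite !cabsE; exact: normrN. Qed.
Lemma cabsB (x y : R[i]) : cabs (x - y) = cabs (y - x).
Proof. by rewrite -opprB cabsN. Qed.
Lemma cabs_ReIm (z : R[i]) : cabs z <= `|complex.Re z| + `|complex.Im z|.
Proof.
rewrite /cabs -[X in _ <= X]ger0_norm ?addr_ge0 // -sqrtr_sqr.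
rewrite ler_sqrt ?sqr_ge0 // -[complex.Re z ^+ 2]real_normK ?num_real //.
rewrite -[complex.Im z ^+ 2]real_normK ?num_real //.
have := normr_ge0 (complex.Re z); have := normr_ge0 (complex.Im z).
set a := `|_|; set b := `|_|; move=> ha hb; nra.
Qed.
Lemma Re_le_cabs (z : R[i]) : `|complex.Re z| <= cabs z.
Proof.
rewrite /cabs -sqrtr_sqr ler_sqrt ?addr_ge0 ?sqr_ge0 //.
by rewrite lerDl sqr_ge0.
Qed.
Lemma Im_le_cabs (z : R[i]) : `|complex.Im z| <= cabs z.
Proof.
rewrite /cabs -sqrtr_sqr ler_sqrt ?addr_ge0 ?sqr_ge0 //.
by rewrite lerDr sqr_ge0.
Qed.
Lemma cabs_cexp (z : R[i]) : cabs (cexp z) = expR (complex.Re z).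
Proof.
rewrite /cabs /cexp /= !exprMn -mulrDr cos2Dsin2 mulr1.
by rewrite sqrtr_sqr ger0_norm // expR_ge0.
Qed.
Lemma expR_lip (x y b : R) : expR x <= b -> expR y <= b ->
  `|expR x - expR y| <= b * `|x - y|.
Proof.
wlog yx : x y / y <= x.
  move=> H bx byy; have [/H|/ltW/H] := leP y x; first exact.
  by move=> /(_ byy bx); rewrite distrC [`|y - x|]distrC.
move=> bx _.
have h : expR x - expR y = expR x * (1 - expR (y - x)).
  by rewrite mulrBr mulr1 -expRD addrCA subrr addr0.
have e1 : 1 + (y - x) <= expR (y - x) by exact: expR_ge1Dx.
have D0 : 0 <= expR x - expR y by rewrite subr_ge0 ler_expR.
rewrite ger0_norm // (ger0_norm (x := x - y)) ?subr_ge0 //.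
have ex0 := expR_ge0 x.
move: h e1 D0 ex0 bx yx; set D := expR x - expR y; set u := expR (y - x);
  set ex := expR x => h e1 D0 ex0 bx yx.
rewrite h; nra.
Qed.
Lemma sin_lip (x y : R) : `|sin x - sin y| <= `|x - y|.
Proof.
wlog yx : x y / y <= x.
  move=> H; have [/H|/ltW/H] := leP y x; first exact.
  by rewrite distrC [`|y - x|]distrC.
have [c _ ->] := @MVT_segment R sin cos y x yx (fun z _ => is_derive_sin z)
   (continuous_subspaceT (@continuous_sin R)).
by rewrite normrM ler_piMl ?cos_max.
Qed.
Lemma cos_lip (x y : R) : `|cos x - cos y| <= `|x - y|.
Proof.
wlog yx : x y / y <= x.
  move=> H; have [/H|/ltW/H] := leP y x; first exact.
  by rewrite distrC [`|y - x|]distrC.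
have [c _ ->] := @MVT_segment R cos (fun z => - sin z) y x yx (fun z _ => is_derive_cos z)
   (continuous_subspaceT (@continuous_cos R)).
by rewrite normrM normrN ler_piMl ?sin_max.
Qed.
Lemma cexp_lip (a b : R[i]) (b1 : R) : expR (complex.Re a) <= b1 ->
  expR (complex.Re b) <= b1 -> cabs (cexp a - cexp b) <= 4 * b1 * cabs (a - b).
Proof.
move=> ha hb.
have hx := Re_le_cabs (a - b); have hy := Im_le_cabs (a - b).
have hc := cabs_ReIm (cexp a - cexp b).
move: a b ha hb hx hy hc => [x1 y1] [x2 y2] /= ha hb hx hy hc.
have ex := expR_lip _ _ _ ha hb.
have cl := cos_lip y1 y2; have sl := sin_lip y1 y2.
have c1 := cos_max y1; have s1 := sin_max y1.
have e20 := expR_ge0 x2.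
set X := `|x1 - x2| in ex hx; set Y := `|y1 - y2| in cl sl hy.
set C := cabs _ in hx hy |- *.
have r1 : `|expR x1 * cos y1 - expR x2 * cos y2| <= b1 * X + b1 * Y.
  have -> : expR x1 * cos y1 - expR x2 * cos y2 =
     (expR x1 - expR x2) * cos y1 + expR x2 * (cos y1 - cos y2) by ring.
  apply: (le_trans (ler_normD _ _)); rewrite !normrM (ger0_norm e20).
  apply: lerD; first by rewrite -[X in _ <= X]mulr1 ler_pM.
  by apply: ler_pM.
have r2 : `|expR x1 * sin y1 - expR x2 * sin y2| <= b1 * X + b1 * Y.
  have -> : expR x1 * sin y1 - expR x2 * sin y2 =
     (expR x1 - expR x2) * sin y1 + expR x2 * (sin y1 - sin y2) by ring.
  apply: (le_trans (ler_normD _ _)); rewrite !normrM (ger0_norm e20).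
  apply: lerD; first by rewrite -[X in _ <= X]mulr1 ler_pM.
  by apply: ler_pM.
apply: (le_trans hc).
have b10 : 0 <= b1 by apply: le_trans hb.
have X0 : 0 <= X by exact: normr_ge0. have Y0 : 0 <= Y by exact: normr_ge0.
move: r1 r2; set U := `|_|; set V := `|_|; move=> r1 r2.
have : b1 * X <= b1 * C by rewrite ler_pM.
have : b1 * Y <= b1 * C by rewrite ler_pM.
lra.
Qed.
Lemma pow_mono (a b : R) k : 0 <= a -> a <= b -> a ^+ k <= b ^+ k.
Proof. by move=> a0 ab; apply: lerXn2r => //; rewrite nnegrE //; exact: le_trans ab. Qed.

Lemma ReB (a b : R[i]) : complex.Re (a - b) = complex.Re a - complex.Re b.
Proof. by case: a; case: b. Qed.
Lemma ImB (a b : R[i]) : complex.Im (a - b) = complex.Im a - complex.Im b.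
Proof. by case: a; case: b. Qed.
Lemma ReMC (k : R) (z : R[i]) : complex.Re ((k%:C)%C * z) = k * complex.Re z.
Proof. by case: z => x y /=; ring. Qed.
Lemma ImMC (k : R) (z : R[i]) : complex.Im ((k%:C)%C * z) = k * complex.Im z.
Proof. by case: z => x y /=; ring. Qed.
End S.

Section Int.
Context d (T : measurableType d) (R : realType) (mu : {measure set T -> \bar R}).

Lemma int_mono (D : set T) (h1 h2 : T -> \bar R) :
  (forall x, D x -> (0 <= h1 x)%E) -> (forall x, D x -> (0 <= h2 x)%E) ->
  (forall x, D x -> (h1 x <= h2 x)%E) ->
  (\int[mu]_(x in D) h1 x <= \int[mu]_(x in D) h2 x)%E.
Proof.
move=> p1 p2 h12; rewrite (ge0_integralE mu p1) (ge0_integralE mu p2) /=.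
apply: ereal_sup_le => _ [k hk <-]; exists k => // x.
apply: le_trans (hk x) _; rewrite /patch; case: ifP => // /set_mem; exact: h12.
Qed.

Lemma Rint_bounds (D : set T) (mD : measurable D) (r : R) (hr : mu D = r%:E)
  (f : T -> R) (lo hi : R) : (forall x, D x -> lo <= f x <= hi) ->
  lo * r <= Rintegral mu D f <= hi * r.
Proof.
move=> hf.
have r0 : 0 <= r by rewrite -lee_fin -hr measure_ge0.
rewrite /Rintegral integralE.
set F := fun x => (f x)%:E.
have mm : forall a b : \bar R, (a <= b)%E -> (maxe a 0 <= maxe b 0)%E.
  move=> a b ab; rewrite ge_max !le_max lexx !orbT andbT.
  by rewrite ab.
have g1 : forall a : \bar R, (0 <= maxe a 0)%E by move=> a; rewrite le_max lexx orbT.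
have hP1 : (\int[mu]_(x in D) cst (maxe lo%:E 0) x <= \int[mu]_(x in D) F^\+ x)%E.
  apply: int_mono => [x Dx|x Dx|x Dx]; [ (exact: g1) || exact: funepos_ge0 | (exact: g1) || exact: funepos_ge0 |].
  rewrite funeposE /=; apply: mm; rewrite lee_fin; by case/andP: (hf x Dx).
have hP2 : (\int[mu]_(x in D) F^\+ x <= \int[mu]_(x in D) cst (maxe hi%:E 0) x)%E.
  apply: int_mono => [x Dx|x Dx|x Dx]; [ (exact: g1) || exact: funepos_ge0 | (exact: g1) || exact: funepos_ge0 |].
  rewrite funeposE /=; apply: mm; rewrite lee_fin; by case/andP: (hf x Dx).
have hN1 : (\int[mu]_(x in D) cst (maxe (- hi%:E) 0) x <= \int[mu]_(x in D) F^\- x)%E.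
  apply: int_mono => [x Dx|x Dx|x Dx]; [ (exact: g1) || exact: funeneg_ge0 | (exact: g1) || exact: funeneg_ge0 |].
  rewrite funenegE /=; apply: mm; rewrite lee_fin lerN2; by case/andP: (hf x Dx).
have hN2 : (\int[mu]_(x in D) F^\- x <= \int[mu]_(x in D) cst (maxe (- lo%:E) 0) x)%E.
  apply: int_mono => [x Dx|x Dx|x Dx]; [ (exact: g1) || exact: funeneg_ge0 | (exact: g1) || exact: funeneg_ge0 |].
  rewrite funenegE /=; apply: mm; rewrite lee_fin lerN2; by case/andP: (hf x Dx).
rewrite !integral_cst // hr -!EFinN -!EFin_max -!EFinM in hP1 hP2 hN1 hN2.
move: hP1 hP2 hN1 hN2.
case: (\int[mu]_(x in D) F^\+ x)%E => [p| |]; case: (\int[mu]_(x in D) F^\- x)%E => [q| |] //=; rewrite ?leye_eq ?leeNy_eq ?lee_fin //.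
move=> h1 h2 h3 h4.
have e1 : Num.max lo 0 * r - Num.max (- lo) 0 * r = lo * r.
  rewrite !maxEle; case: (lerP 0 lo) => l0.
    have -> : (- lo <= 0) = true by rewrite oppr_le0.
    by case: (leP lo 0) => h; [have -> : lo = 0 by lra|]; ring.
  have -> : (lo <= 0) = true by rewrite ltW.
  by case: (leP (- lo) 0) => h; [lra|ring].
have e2 : Num.max hi 0 * r - Num.max (- hi) 0 * r = hi * r.
  rewrite !maxEle; case: (lerP 0 hi) => l0.
    have -> : (- hi <= 0) = true by rewrite oppr_le0.
    by case: (leP hi 0) => h; [have -> : hi = 0 by lra|]; ring.
  have -> : (hi <= 0) = true by rewrite ltW.
  by case: (leP (- hi) 0) => h; [lra|ring].
apply/andP; split; lra.
Qed.
End Int.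

Section Main.
Variables (R : realType) (n : nat) (A : 'M[nat]_n.+1) (theta : nat -> R).
Hypothesis th_mono : forall m, (1 <= m)%N -> theta m.+1 <= theta m.
Hypothesis th_ge0 : forall m, (1 <= m)%N -> 0 <= theta m.
Local Notation X := (shX n).

Lemma th_anti i j : (1 <= i)%N -> (i <= j)%N -> theta j <= theta i.
Proof.
move=> i1; elim: j => [|j IH]; first by rewrite leqn0 => /eqP ->.
rewrite leq_eqVlt => /orP[/eqP ->//|]; rewrite ltnS => ij.
apply: le_trans (IH ij); apply: th_mono; exact: leq_trans i1 ij.
Qed.

Definition agree (w w' : X) k := forall j, (j < k)%N -> w j = w' j.

Lemma Sigma_scons i (w : X) : A i (w 0%N) = 1%N -> Sigma A w -> Sigma A (scons i w).
Proof. by move=> h1 hw [|j] //=. Qed.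

Lemma agree_scons i (w w' : X) k : agree w w' k -> agree (scons i w) (scons i w') k.+1.
Proof. by move=> h [|j] //= jk; apply: h. Qed.

Lemma var_pt (phi : X -> R[i]) k r w w' : (var A phi k <= r%:E)%E ->
  Sigma A w -> Sigma A w' -> agree w w' k -> cabs (phi w - phi w') <= r.
Proof.
move=> hv hw hw' ag; rewrite -lee_fin; apply: le_trans hv.
by apply: ereal_sup_ubound; exists w, w'.
Qed.

Lemma var_le (phi : X -> R[i]) k r :
  (forall w w', Sigma A w -> Sigma A w' -> agree w w' k -> cabs (phi w - phi w') <= r) ->
  (var A phi k <= r%:E)%E.
Proof.
move=> h; apply: ge_ereal_sup => _ [w [w' [hw hw' ag ->]]].
by rewrite lee_fin; apply: h.
Qed.

Lemma cabs0 : cabs (0 : R[i]) = 0.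
Proof. by rewrite cabsE normr0. Qed.

Lemma cabs_sum (P : pred 'I_n.+1) (F : 'I_n.+1 -> R[i]) (B : R) : 0 <= B ->
  (forall i, P i -> cabs (F i) <= B) -> cabs (\sum_(i < n.+1 | P i) F i) <= n.+1%:R * B.
Proof.
move=> B0 hF; rewrite big_mkcond /=.
apply: (@le_trans _ _ (\sum_(i < n.+1) B)); last first.
  by rewrite sumr_const card_ord mulr_natl.
elim/big_rec2: _ => [|i y1 y2 _ h]; first by rewrite cabs0.
apply: le_trans (cabsD _ _ _) _; apply: lerD => //.
by case: ifP => [/hF //|_]; rewrite cabs0.
Qed.

Lemma term_bound (a b u v : R[i]) (B1 : R) : expR (complex.Re a) <= B1 ->
  expR (complex.Re b) <= B1 ->
  cabs (cexp a * u - cexp b * v) <= B1 * cabs (u - v) + 4 * B1 * cabs (a - b) * cabs v.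
Proof.
move=> ha hb.
have -> : cexp a * u - cexp b * v = cexp a * (u - v) + (cexp a - cexp b) * v by ring.
apply: le_trans (cabsD _ _ _) _; rewrite !cabsM cabs_cexp.
apply: lerD; first by apply: ler_wpM2r => //; exact: cabs_ge0.
by apply: ler_wpM2r; [exact: cabs_ge0| exact: cexp_lip].
Qed.

Variables (g : X -> R[i]) (b1 : R).
Hypothesis b1_ge0 : 0 <= b1.
Hypothesis hb1 : forall w, Sigma A w -> expR (complex.Re (g w)) <= b1.

Lemma L_sup (psi : X -> R[i]) (sig : R) w : 0 <= sig ->
  (forall w, Sigma A w -> cabs (psi w) <= sig) -> Sigma A w ->
  cabs (Lop A g psi w) <= n.+1%:R * (b1 * sig).
Proof.
move=> s0 hs hw; rewrite /Lop; apply: cabs_sum; first exact: mulr_ge0.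
move=> i /eqP hi; have hiw := Sigma_scons _ _ hi hw.
rewrite cabsM cabs_cexp; apply: ler_pM; [exact: expR_ge0|exact: cabs_ge0|exact: hb1|exact: hs].
Qed.

Lemma L_var (psi : X -> R[i]) k w w' (del sig G : R) : (1 <= k)%N ->
  0 <= del -> 0 <= sig -> 0 <= G -> Sigma A w -> Sigma A w' -> agree w w' k ->
  (forall i, A i (w 0%N) = 1%N -> cabs (psi (scons i w) - psi (scons i w')) <= del) ->
  (forall w, Sigma A w -> cabs (psi w) <= sig) ->
  (var A g k.+1 <= G%:E)%E ->
  cabs (Lop A g psi w - Lop A g psi w') <= n.+1%:R * (b1 * del + 4 * b1 * G * sig).
Proof.
move=> k1 d0 s0 G0 hw hw' ag hd hs hG.
have e0 : w' 0%N = w 0%N by rewrite ag.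
rewrite /Lop e0 -sumrB; apply: cabs_sum.
  by rewrite addr_ge0 ?mulr_ge0.
move=> i /eqP hi.
have hiw := Sigma_scons _ _ hi hw.
have hiw' : Sigma A (scons i w') by apply: Sigma_scons => //; rewrite e0.
have tb := term_bound (g (scons i w)) (g (scons i w')) (psi (scons i w)) (psi (scons i w')) b1 (hb1 _ hiw) (hb1 _ hiw'). apply: le_trans tb _.
apply: lerD; first by apply: ler_wpM2l => //; exact: hd.
apply: ler_pM.
- by apply: mulr_ge0; [rewrite mulr_ge0 | exact: cabs_ge0].
- exact: cabs_ge0.
- apply: ler_wpM2l; first by rewrite mulr_ge0.
  exact: var_pt hG hiw hiw' (agree_scons _ _ _ _ ag).
- exact: hs.
Qed.

Definition bnd (phi : X -> R[i]) (s c : R) := [/\ 0 <= s, 0 <= c,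
  (forall w, Sigma A w -> cabs (phi w) <= s) &
  (forall k w w', Sigma A w -> Sigma A w' -> agree w w' k ->
     cabs (phi w - phi w') <= c * theta k.+1 ^+ k)].

Lemma th1_ge0 : 0 <= theta 1. Proof. exact: th_ge0. Qed.
Lemma thp_ge0 k j : (1 <= k)%N -> 0 <= theta k ^+ j.
Proof. by move=> k1; apply: exprn_ge0; apply: th_ge0. Qed.

Lemma cabs_diff_sup (phi : X -> R[i]) s w w' : (forall w, Sigma A w -> cabs (phi w) <= s) ->
  Sigma A w -> Sigma A w' -> cabs (phi w - phi w') <= 2 * s.
Proof.
move=> hs hw hw'; apply: le_trans (cabsD _ _ _) _; rewrite cabsN mulr2n mulrDl mul1r.
by apply: lerD; apply: hs.
Qed.

Variable b2 : R.
Hypothesis b2_ge0 : 0 <= b2.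
Hypothesis hg : forall k, (1 <= k)%N -> (var A g k <= (b2 * theta k ^+ k)%:E)%E.

Definition cL := n.+1%:R * b1 * (1 + theta 1 + 4 * b2 * theta 1 + 2).

Lemma L_bnd phi s c : bnd phi s c ->
  bnd (Lop A g phi) (n.+1%:R * (b1 * s))
      (n.+1%:R * b1 * (theta 1 * c + 4 * b2 * theta 1 * s + 2 * s)).
Proof.
move=> [s0 c0 hs hv].
have t1 := th1_ge0.
have N0 : 0 <= n.+1%:R :> R by [].
split.
- by rewrite !mulr_ge0.
- by rewrite !mulr_ge0 // !addr_ge0 ?mulr_ge0.
- by move=> w hw; apply: L_sup.
move=> [|k] w w' hw hw' ag.
  rewrite expr0 mulr1; apply: le_trans (cabs_diff_sup _ (n.+1%:R * (b1 * s)) _ _ _ hw hw') _.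
    by move=> w1 hw1; apply: L_sup.
  have : 0 <= n.+1%:R * b1 * (theta 1 * c + 4 * b2 * theta 1 * s) by rewrite !mulr_ge0 ?addr_ge0 ?mulr_ge0.
  have : 0 <= n.+1%:R * (b1 * s) by rewrite !mulr_ge0.
  set P := n.+1%:R * (b1 * s); set Q := n.+1%:R * b1 * _.
  have -> : n.+1%:R * b1 * (theta 1 * c + 4 * b2 * theta 1 * s + 2 * s) = Q + 2 * P.
    by rewrite /P /Q; ring.
  lra.
set t := theta k.+2 ^+ k.+1.
have t0 : 0 <= t by apply: thp_ge0.
have T30 : 0 <= theta k.+3 ^+ k.+2 by apply: thp_ge0.
have G0 : 0 <= b2 * theta k.+2 ^+ k.+2 by rewrite mulr_ge0 // thp_ge0.
have := L_var phi k.+1 w w' (c * theta k.+3 ^+ k.+2) s (b2 * theta k.+2 ^+ k.+2)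
  (isT : (1 <= k.+1)%N) (mulr_ge0 c0 T30) s0 G0 hw hw' ag.
move=> /(_ _ hs (hg _ (isT : (1 <= k.+2)%N))).
have hT3 : theta k.+3 ^+ k.+2 <= t * theta 1.
  rewrite exprSr; apply: ler_pM; [exact: thp_ge0|exact: th_ge0| |exact: th_anti].
  by apply: pow_mono; [exact: th_ge0|exact: th_mono].
have hG : theta k.+2 ^+ k.+2 <= t * theta 1.
  by rewrite exprSr; apply: ler_wpM2l => //; exact: th_anti.
move=> H; apply: (le_trans (H _)).
  move=> i hi; apply: hv; [exact: Sigma_scons| |exact: agree_scons].
  by apply: Sigma_scons => //; rewrite -(ag 0%N).
have e1 : b1 * (c * theta k.+3 ^+ k.+2) <= b1 * (c * (t * theta 1)).
  by apply: ler_wpM2l => //; apply: ler_wpM2l.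
have e2 : 4 * b1 * (b2 * theta k.+2 ^+ k.+2) * s <= 4 * b1 * (b2 * (t * theta 1)) * s.
  apply: ler_wpM2r => //; apply: ler_wpM2l; first by rewrite mulr_ge0.
  by apply: ler_wpM2l.
have e3 : 0 <= n.+1%:R * b1 * s * t by rewrite !mulr_ge0.
have e4 : n.+1%:R * (b1 * (c * theta k.+3 ^+ k.+2) + 4 * b1 * (b2 * theta k.+2 ^+ k.+2) * s)
   <= n.+1%:R * (b1 * (c * (t * theta 1)) + 4 * b1 * (b2 * (t * theta 1)) * s).
  by apply: ler_wpM2l => //; apply: lerD.
apply: le_trans e4 _.
have -> : n.+1%:R * b1 * (theta 1 * c + 4 * b2 * theta 1 * s + 2 * s) * t =
  n.+1%:R * (b1 * (c * (t * theta 1)) + 4 * b1 * (b2 * (t * theta 1)) * s) + 2 * (n.+1%:R * b1 * s * t) by ring.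
lra.
Qed.

Hypothesis th_cvg : theta @ \oo --> 0.

Lemma bnd_var phi s c k : bnd phi s c -> (var A phi k <= (c * theta k.+1 ^+ k)%:E)%E.
Proof. by move=> [_ _ _ hv]; apply: var_le => w w' hw hw' ag; apply: hv. Qed.

Lemma near_oo (P : nat -> Prop) : (\forall k \near \oo, P k) <-> exists N, forall k, (N <= k)%N -> P k.
Proof. split => [[N _ h]|[N h]]; [exists N| exists N] => //. Qed.

Lemma bnd_inV phi s c : bnd phi s c -> inV A phi.
Proof.
move=> hb e e0.
have e20 : 0 < e / 2 by rewrite divr_gt0.
have [N HN] := (near_oo _).1 (@cvgr_dist_le _ _ _ _ _ _ _ th_cvg _ e20).
have [_ c0 _ _] := hb.
set N1 := Num.Def.archi_bound c.
have hN1 := archi_boundP c0.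
apply (near_oo _).2; exists (maxn N N1) => k; rewrite geq_max => /andP[kN kN1].
apply: le_trans (bnd_var _ _ _ k hb) _; rewrite lee_fin.
have ht : 0 <= theta k.+1 <= e / 2.
  rewrite th_ge0 //=; have := HN k.+1 (leq_trans kN (leqnSn _)).
  by rewrite sub0r normrN => /(le_trans (ler_norm _)).
case/andP: ht => ht0 ht1.
apply: (@le_trans _ _ (c * (e / 2) ^+ k)).
  apply: ler_wpM2l; [by case: hb| exact: pow_mono].
rewrite expr_div_n.
have h2 : c <= 2 ^+ k.
  have h3 : (N1%:R : R) <= 2 ^+ k.
    rewrite -natrX ler_nat.
    by apply: leq_trans kN1 (ltnW (ltn_expl _ _)).
  exact: le_trans (ltW hN1) h3.
apply: (@le_trans _ _ (2 ^+ k * (e ^+ k / 2 ^+ k))).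
  by apply: ler_wpM2r => //; rewrite divr_ge0 // exprn_ge0 // ltW.
by rewrite mulrCA divff ?mulr1 // expf_neq0.
Qed.

Lemma bnd_Bconst phi s c : bnd phi s c -> Bconst A theta phi c.
Proof. move=> hb; have [_ c0 _ _] := hb; split => // k; exact: bnd_var hb. Qed.

Lemma bnd_inB phi s c : bnd phi s c -> inB A theta phi.
Proof. by move=> hb; split; [exact: bnd_inV hb| exists c; exact: bnd_Bconst hb]. Qed.

Lemma bnd_Bnorm phi s c : bnd phi s c -> Bnorm A theta phi <= s + c.
Proof.
move=> hb; have [s0 c0 hs _] := hb.
apply: lerD.
  have : (supn A phi <= s%:E)%E.
    by apply: ge_ereal_sup => _ [w [hw ->]]; rewrite lee_fin; apply: hs.
  by case: (supn A phi) => [r| |] //=; rewrite lee_fin.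
apply: ge_inf; last exact: bnd_Bconst hb.
by exists 0 => x [].
Qed.

Lemma inB_bnd phi c : Bconst A theta phi c -> bnd phi (fine (supn A phi)) c.
Proof.
move=> [c0 hc].
have hv : forall k w w', Sigma A w -> Sigma A w' -> agree w w' k ->
     cabs (phi w - phi w') <= c * theta k.+1 ^+ k.
  by move=> k w w' hw hw' ag; apply: var_pt (hc k) hw hw' ag.
have [[w0 hw0]|nW] := pselect (exists w, Sigma A w); last first.
  have -> : supn A phi = -oo%E.
    rewrite /supn; apply/eqP; rewrite eq_le leNye andbT.
    by apply: ge_ereal_sup => x [w [hw _]]; exfalso; apply: nW; exists w.
  by split => // w hw; exfalso; apply: nW; exists w.
have ub : (supn A phi <= (cabs (phi w0) + c)%:E)%E.
  apply: ge_ereal_sup => _ [w [hw ->]]; rewrite lee_fin.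
  have := hv 0%N w w0 hw hw0 (fun j (h : (j < 0)%N) => False_ind _ (notF h)).
  rewrite expr0 mulr1 => h.
  have -> : phi w = (phi w - phi w0) + phi w0 by rewrite subrK.
  by apply: le_trans (cabsD _ _ _) _; rewrite addrC lerD2l.
have lb : ((cabs (phi w0))%:E <= supn A phi)%E.
  by apply: ereal_sup_ubound; exists w0.
have fin : supn A phi \is a fin_num.
  by rewrite fin_numE; apply/andP; split; apply/negP => /eqP E; rewrite E in ub lb.
split => //.
- by rewrite -lee_fin fineK //; apply: le_trans lb; rewrite lee_fin cabs_ge0.
- move=> w hw; rewrite -lee_fin fineK //.
  by apply: ereal_sup_ubound; exists w.
Qed.

Lemma opnorm_of (T : (X -> R[i]) -> (X -> R[i])) (K : R) : 0 <= K ->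
  (forall phi s c, bnd phi s c -> exists s' c', bnd (T phi) s' c' /\ s' + c' <= K * (s + c)) ->
  opnorm_le A theta T K.
Proof.
move=> K0 hT phi [_ [c0 hc0]].
have Hc : forall c, Bconst A theta phi c ->
   inB A theta (T phi) /\ Bnorm A theta (T phi) <= K * (fine (supn A phi) + c).
  move=> c hc; have [s' [c' [hb hsc]]] := hT _ _ _ (inB_bnd _ _ hc).
  split; first exact: bnd_inB hb.
  exact: le_trans (bnd_Bnorm _ _ _ hb) hsc.
split; first exact: (Hc _ hc0).1.
rewrite /Bnorm.
have [Kz|Kp] := eqVneq K 0.
  by have := (Hc _ hc0).2; rewrite /Bnorm Kz !mul0r.
have Kgt : 0 < K by rewrite lt_def Kp K0.
rewrite -ler_pdivrMl //.
rewrite -lerBlDl; apply: lb_le_inf; first by exists c0.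
move=> c hc; rewrite lerBlDl ler_pdivrMl //; exact: (Hc _ hc).2.
Qed.

Lemma openX_cylX (w : X) k : openX (cylX w k).
Proof.
move=> x hx; exists k => y hy j jk; rewrite hy // hx //.
Qed.

Lemma openX_nSigma : openX (~` Sigma A).
Proof.
move=> x /= hx.
have [j hj] : exists j, A (x j) (x j.+1) <> 1%N.
  by apply: contrapT => H; apply: hx => j; apply: contrapT => h; apply: H; exists j.
exists j.+2 => y hy hSy; apply: hj; rewrite -hy // -hy //; exact: hSy.
Qed.

Lemma meas_cyl (w : X) m : measurable (cyl A w m : set (XB n)).
Proof.
apply: measurableI.
  rewrite -(setCK (Sigma A)); apply: measurableC; apply: sub_sigma_algebra.
  exact: openX_nSigma.
apply: sub_sigma_algebra; exact: openX_cylX.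
Qed.

Variable mu : probability (XB n) R.
Hypothesis hpos : forall U, relopen A U -> U !=set0 -> (0 < mu U)%E.

Lemma cyl_pos (w : X) m : Sigma A w -> (0 < mu (cyl A w m))%E.
Proof.
move=> hw; apply: hpos; last by exists w; split.
split; first by move=> x [].
move=> x [hx xw]; exists m => y [hy yx]; split => // j jm.
by rewrite yx // xw.
Qed.

Lemma E_close (phi : X -> R[i]) m w eps : Sigma A w ->
  (forall x, cyl A w m x -> cabs (phi x - phi w) <= eps) ->
  cabs (phi w - Eop A mu m phi w) <= 2 * eps.
Proof.
move=> hw he.
set D := cyl A w m.
have mD : measurable (D : set (XB n)) by exact: meas_cyl.
have p0 := cyl_pos w m hw.
have fin : mu D \is a fin_num.
  rewrite ge0_fin_numE; last exact: ltW.
  by apply: le_lt_trans (probability_le1 _ mD) _; rewrite ltry.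
set r := fine (mu D).
have hr : mu D = r%:E by rewrite fineK.
have r0 : 0 < r by rewrite -lte_fin -hr.
have key : forall (F : R[i] -> R), (forall a b, F (a - b) = F a - F b) ->
   (forall z, `|F z| <= cabs z) ->
   `|F (phi w) - r^-1 * Rintegral mu D (fun x => F (phi x))| <= eps.
  move=> F FB Fc.
  have hb : forall x, D x -> F (phi w) - eps <= F (phi x) <= F (phi w) + eps.
    move=> x Dx; have := le_trans (Fc _) (he x Dx); rewrite FB ler_norml.
    move=> /andP[h1 h2]; apply/andP; split; lra.
  have := @Rint_bounds _ _ _ mu _ mD _ hr _ _ _ hb.
  set I := Rintegral _ _ _ => /andP[h1 h2].
  have hI : I = r * (r^-1 * I) by rewrite mulrA divff ?mul1r // gt_eqF.
  move: h1 h2; rewrite hI; set J := r^-1 * I => h1 h2.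
  rewrite [X in _ <= X]mulrC ler_pM2l // in h2.
  rewrite [X in X <= _]mulrC ler_pM2l // in h1.
  rewrite mulrA mulVf ?gt_eqF // mul1r ler_norml; apply/andP; split; lra.
apply: le_trans (cabs_ReIm _ _) _; rewrite mulr2n mulrDl mul1r.
apply: lerD.
  rewrite ReB /Eop ReMC /cint /=; apply: key; [exact: ReB| exact: Re_le_cabs].
rewrite ImB /Eop ImMC /cint /=; apply: key; [exact: ImB| exact: Im_le_cabs].
Qed.

Lemma E_agree (phi : X -> R[i]) m (w w' : X) : agree w w' m ->
  Eop A mu m phi w = Eop A mu m phi w'.
Proof.
move=> ag; rewrite /Eop.
have -> : cyl A w m = cyl A w' m.
  rewrite /cyl /cylX; congr (_ `&` _); apply/seteqP; split => x /= h j jm;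
  by rewrite h // ag.
by [].
Qed.

Lemma Mop_eq m (phi : X -> R[i]) :
  opsub (Lop A g) (Kop A mu g m) phi = Lop A g (fun x => phi x - Eop A mu m phi x).
Proof.
apply/funext => w; rewrite /opsub /Kop /Lop -sumrB; apply: eq_bigr => i _.
by rewrite mulrBr.
Qed.

Variable m : nat.
Hypothesis m1 : (1 <= m)%N.
Hypothesis thm1 : theta m.+1 <= 1.
Local Notation th := (theta m.+1).

Lemma th0 : 0 <= th. Proof. exact: th_ge0. Qed.

Lemma pow_le_th j : (1 <= j)%N -> th ^+ j <= th.
Proof.
case: j => // j _; rewrite exprS -[X in _ <= X]mulr1.
by apply: ler_wpM2l; [exact: th0| exact: exprn_ile1 th0 thm1].
Qed.

Lemma psi_sup phi s c x : bnd phi s c -> Sigma A x ->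
  cabs (phi x - Eop A mu m phi x) <= 2 * (c * th ^+ m).
Proof.
move=> [_ _ _ hv] hx; apply: E_close => // y [hy yx].
exact: hv m y x hy hx yx.
Qed.

Lemma psi_sup' phi s c x : bnd phi s c -> Sigma A x ->
  cabs (phi x - Eop A mu m phi x) <= 2 * c * th.
Proof.
move=> hb hx; apply: le_trans (psi_sup _ _ _ _ hb hx) _.
have [_ c0 _ _] := hb.
rewrite -mulrA; apply: ler_wpM2l => //; apply: ler_wpM2l => //; exact: pow_le_th.
Qed.

Lemma psi_diff phi s c k u u' : bnd phi s c -> Sigma A u -> Sigma A u' ->
  agree u u' k.+1 ->
  cabs ((phi u - Eop A mu m phi u) - (phi u' - Eop A mu m phi u')) <=
  4 * c * theta k.+1 ^+ k * th.
Proof.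
move=> hb hu hu' ag.
have [_ c0 _ hv] := hb.
have tk0 : 0 <= theta k.+1 ^+ k by apply: thp_ge0.
have [mk|km] := leqP m k.+1.
  rewrite (E_agree phi m u u'); last by move=> j jm; apply: ag; exact: leq_trans jm mk.
  have -> : phi u - Eop A mu m phi u' - (phi u' - Eop A mu m phi u') = phi u - phi u' by ring.
  apply: le_trans (hv _ _ _ hu hu' ag) _.
  have h1 : theta k.+2 ^+ k.+1 <= theta k.+1 ^+ k * th.
    rewrite exprSr; apply: ler_pM; [exact: thp_ge0|exact: th_ge0| |exact: th_anti].
    by apply: pow_mono; [exact: th_ge0|exact: th_mono].
  apply: (@le_trans _ _ (c * (theta k.+1 ^+ k * th))); first exact: ler_wpM2l.
  have : 0 <= c * (theta k.+1 ^+ k * th) by rewrite !mulr_ge0 // th0.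
  set P := c * _ => hP.
  have -> : 4 * c * theta k.+1 ^+ k * th = 4 * P by rewrite /P; ring.
  lra.
apply: le_trans (cabs_diff_sup (fun x => phi x - Eop A mu m phi x) (2 * (c * th ^+ m)) _ _ _ hu hu') _.
  by move=> y hy; apply: psi_sup hb hy.
have thp : forall j, 0 <= th ^+ j by move=> j; apply: exprn_ge0; exact: th0.
have hm : th ^+ m <= theta k.+1 ^+ k * th.
  have -> : th ^+ m = th ^+ k * th ^+ (m - k) by rewrite -exprD subnKC // ltnW // ltnW.
  apply: ler_pM; [exact: thp|exact: thp| |].
    apply: pow_mono; first exact: th0.
    apply: th_anti => //; lia.
  by apply: pow_le_th; rewrite subn_gt0 ltnW.
have : c * th ^+ m <= c * (theta k.+1 ^+ k * th) by apply: ler_wpM2l.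
have : 0 <= c * th ^+ m by rewrite mulr_ge0 // exprn_ge0 // th0.
set P := c * (theta k.+1 ^+ k * th); set Q := c * th ^+ m.
have -> : 4 * c * theta k.+1 ^+ k * th = 4 * P by rewrite /P; ring.
lra.
Qed.

Lemma M_bnd phi s c : bnd phi s c ->
  bnd (opsub (Lop A g) (Kop A mu g m) phi) (n.+1%:R * (b1 * (2 * c * th)))
      (n.+1%:R * b1 * c * th * (8 + 8 * b2 * theta 1)).
Proof.
move=> hb; have [s0 c0 _ _] := hb.
rewrite Mop_eq; set psi := fun x => phi x - Eop A mu m phi x.
have t0 := th0; have t1 := th1_ge0.
have sg0 : 0 <= 2 * c * th by rewrite !mulr_ge0.
have hs : forall x, Sigma A x -> cabs (psi x) <= 2 * c * th.
  by move=> x hx; exact: psi_sup' hb hx.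
have N0 : 0 <= n.+1%:R :> R by [].
split.
- by rewrite !mulr_ge0.
- by rewrite !mulr_ge0 // addr_ge0 // !mulr_ge0.
- by move=> w hw; apply: L_sup.
move=> [|k] w w' hw hw' ag.
  rewrite expr0 mulr1.
  apply: le_trans (cabs_diff_sup _ (n.+1%:R * (b1 * (2 * c * th))) _ _ _ hw hw') _.
    by move=> w1 hw1; apply: L_sup.
  have : 0 <= n.+1%:R * b1 * c * th * (4 + 8 * b2 * theta 1) by rewrite !mulr_ge0 // addr_ge0 // !mulr_ge0.
  set P := n.+1%:R * b1 * c * th * (4 + _) => hP.
  have -> : n.+1%:R * b1 * c * th * (8 + 8 * b2 * theta 1) = 2 * (n.+1%:R * (b1 * (2 * c * th))) + P.
    by rewrite /P; ring.
  lra.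
set t := theta k.+2 ^+ k.+1.
have tt0 : 0 <= t by apply: thp_ge0.
have G0 : 0 <= b2 * theta k.+2 ^+ k.+2 by rewrite mulr_ge0 // thp_ge0.
have d0 : 0 <= 4 * c * t * th by rewrite !mulr_ge0.
have := L_var psi k.+1 w w' (4 * c * t * th) (2 * c * th) (b2 * theta k.+2 ^+ k.+2)
  (isT : (1 <= k.+1)%N) d0 sg0 G0 hw hw' ag.
move=> /(_ _ hs (hg _ (isT : (1 <= k.+2)%N))) H.
apply: (le_trans (H _)).
  move=> i hi; apply: psi_diff hb _ _ (agree_scons _ _ _ _ ag); first exact: Sigma_scons.
  by apply: Sigma_scons => //; rewrite -(ag 0%N).
have hG : theta k.+2 ^+ k.+2 <= t * theta 1.
  by rewrite exprSr; apply: ler_wpM2l => //; exact: th_anti.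
have e2 : 4 * b1 * (b2 * theta k.+2 ^+ k.+2) * (2 * c * th) <= 4 * b1 * (b2 * (t * theta 1)) * (2 * c * th).
  apply: ler_wpM2r => //; apply: ler_wpM2l; first by rewrite mulr_ge0.
  by apply: ler_wpM2l.
have e4 : n.+1%:R * (b1 * (4 * c * t * th) + 4 * b1 * (b2 * theta k.+2 ^+ k.+2) * (2 * c * th))
   <= n.+1%:R * (b1 * (4 * c * t * th) + 4 * b1 * (b2 * (t * theta 1)) * (2 * c * th)).
  by apply: ler_wpM2l => //; apply: lerD.
apply: le_trans e4 _.
have e3 : 0 <= n.+1%:R * b1 * c * th * t by rewrite !mulr_ge0.
have -> : n.+1%:R * b1 * c * th * (8 + 8 * b2 * theta 1) * t =
  n.+1%:R * (b1 * (4 * c * t * th) + 4 * b1 * (b2 * (t * theta 1)) * (2 * c * th)) + 4 * (n.+1%:R * b1 * c * th * t) by ring.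
lra.
Qed.

Lemma iter_bnd (T : (X -> R[i]) -> (X -> R[i])) (K : R) : 0 <= K ->
  (forall phi s c, bnd phi s c -> exists s' c', bnd (T phi) s' c' /\ s' + c' <= K * (s + c)) ->
  forall q phi s c, bnd phi s c -> exists s' c', bnd (iter q T phi) s' c' /\ s' + c' <= K ^+ q * (s + c).
Proof.
move=> K0 hT; elim => [|q IH] phi s c hb.
  by exists s, c; split => //; rewrite expr0 mul1r.
have [s1 [c1 [hb1' h1]]] := IH _ _ _ hb.
have [s2 [c2 [hb2 h2]]] := hT _ _ _ hb1'.
exists s2, c2; split => //.
apply: le_trans h2 _; rewrite exprS -mulrA; apply: ler_wpM2l => //.
Qed.

Definition cM := n.+1%:R * b1 * (10 + 8 * b2 * theta 1).

Lemma cL_ge0 : 0 <= cL.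
Proof. by rewrite /cL !mulr_ge0 // !addr_ge0 // ?mulr_ge0 // th1_ge0. Qed.
Lemma cM_ge0 : 0 <= cM.
Proof. by rewrite /cM !mulr_ge0 // !addr_ge0 // ?mulr_ge0 // th1_ge0. Qed.

Lemma final_L K : cL <= K -> opnorm_le A theta (Lop A g) K.
Proof.
move=> hK; apply: opnorm_of; first exact: le_trans cL_ge0 hK.
move=> phi s c hb; have [s0 c0 _ _] := hb.
eexists; eexists; split; first exact: L_bnd hb.
apply: le_trans (ler_wpM2r _ hK); last by rewrite addr_ge0.
have t1 := th1_ge0.
have : 0 <= n.+1%:R * b1 * (c + theta 1 * s + 4 * b2 * theta 1 * c + 2 * c)
  by rewrite !mulr_ge0 // !addr_ge0 // !mulr_ge0.
set P := n.+1%:R * b1 * _ => hP.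
have -> : cL * (s + c) = n.+1%:R * (b1 * s) +
    n.+1%:R * b1 * (theta 1 * c + 4 * b2 * theta 1 * s + 2 * s) + P by rewrite /P /cL; ring.
lra.
Qed.

Lemma final_M q K : cM <= K ->
  opnorm_le A theta (opsub (iter q (Lop A g)) (Kqop A mu g m q)) (K ^+ q * th ^+ q).
Proof.
move=> hK.
have K0 : 0 <= K by exact: le_trans cM_ge0 hK.
have -> : opsub (iter q (Lop A g)) (Kqop A mu g m q) = iter q (opsub (Lop A g) (Kop A mu g m)).
  apply/funext => phi; apply/funext => w; rewrite /opsub /Kqop /opsub.
  by rewrite opprB addrC subrK.
rewrite -exprMn; apply: opnorm_of; first by rewrite exprn_ge0 // mulr_ge0 // th0.
apply: iter_bnd; first by rewrite mulr_ge0 // th0.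
move=> phi s c hb; have [s0 c0 _ _] := hb.
eexists; eexists; split; first exact: M_bnd hb.
have t1 := th1_ge0; have t0 := th0.
apply: (@le_trans _ _ (cM * th * (s + c))); last first.
  by apply: ler_wpM2r; [rewrite addr_ge0| apply: ler_wpM2r].
have : 0 <= cM * th * s by apply: mulr_ge0 => //; apply: mulr_ge0 => //; exact: cM_ge0.
set P := cM * th * s => hP.
have -> : cM * th * (s + c) = n.+1%:R * (b1 * (2 * c * th)) +
    n.+1%:R * b1 * c * th * (8 + 8 * b2 * theta 1) + P by rewrite /P /cM; ring.
lra.
Qed.

End Main.

Theorem lemma3p6 (R : realType) (n : nat) (theta : nat -> R) (b1 b2 : R) :
  (forall m, (1 <= m)%N -> theta m.+1 <= theta m) ->
  (forall m, (1 <= m)%N -> 0 <= theta m) ->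
  theta @ \oo --> 0 ->
  0 < b1 -> 0 < b2 ->
  exists C2 : R, 0 < C2 /\
    forall (A : 'M[nat]_n.+1) (mu : probability (XB n) R),
      zero_one A -> aperiodic A ->
      (mu (Sigma A) = 1)%E ->
      (forall U, relopen A U -> U !=set0 -> (0 < mu U)%E) ->
      forall (m q : nat), (1 <= m)%N -> (1 <= q)%N -> theta m.+1 <= 1 ->
      forall g : shX n -> R[i], condH A theta b1 b2 g ->
        opnorm_le A theta (Lop A g) C2 /\
        opnorm_le A theta (opsub (iter q (Lop A g)) (Kqop A mu g m q))
          (C2 ^+ q * theta m.+1 ^+ q).
Proof.
move=> hmono hge0 hcvg b10 b20.
have t1 : 0 <= theta 1 by exact: hge0.
have hb1' := ltW b10; have hb2' := ltW b20.
have cL0 : 0 <= cL R n theta b1 b2 by rewrite /cL !(mulr_ge0, addr_ge0).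
have cM0 : 0 <= cM R n theta b1 b2 by rewrite /cM !(mulr_ge0, addr_ge0).
exists (cL R n theta b1 b2 + cM R n theta b1 b2 + 1); split.
  by rewrite ltr_pwDr // addr_ge0.
move=> A mu _ _ _ hpos m q m1 _ thm1 g [_ hb1 hg].
split.
  apply: (final_L R n A theta hmono hge0 g b1 (ltW b10) hb1 b2 (ltW b20) hg hcvg).
  by rewrite -addrA lerDl addr_ge0.
apply: (final_M R n A theta hmono hge0 g b1 (ltW b10) hb1 b2 (ltW b20) hg hcvg mu hpos m m1 thm1 q).
by rewrite addrAC lerDr addr_ge0.
Qed.
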